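(* Let $(w_1,w_2,w_3)\in(0,\infty)^3$ with $w_1+w_2+w_3\ge2\max\{w_1,w_2,w_3\}$, and put $z_1=\frac{w_2+w_3-w_1}{2w_2}$, $z_2=\frac{w_3+w_1-w_2}{2w_3}$, $z_3=\frac{w_1+w_2-w_3}{2w_1}$, so $z_i\in[0,1]$. Let $\overrightarrow{p_1}=(1,z_1,0)$, $\overrightarrow{p_2}=(0,1,z_2)$, $\overrightarrow{p_3}=(z_3,0,1)$, and let $m_{12},m_{23},m_{31}$ be given by $$m_{12}=\frac{(1-z_1)(1-z_2)(1-z_3)-(1-z_1)(1-z_2)+(1-z_1)}{(1-z_1)(1-z_2)(1-z_3)+1},$$ $$m_{23}=\frac{(1-z_1)(1-z_2)(1-z_3)-(1-z_2)(1-z_3)+(1-z_2)}{(1-z_1)(1-z_2)(1-z_3)+1},$$ $$m_{31}=\frac{(1-z_1)(1-z_2)(1-z_3)-(1-z_3)(1-z_1)+(1-z_3)}{(1-z_1)(1-z_2)(1-z_3)+1}.$$ Then $m_{12},m_{23},m_{31}\ge0$, $m_{12}+m_{23}+m_{31}=1$, and the probability measure on $[0,1]^3$ placing mass $m_{12}$, $m_{23}$, $m_{31}$ uniformly on the segments $[\overrightarrow{p_1},\overrightarrow{p_2}]$, $[\overrightarrow{p_2},\overrightarrow{p_3}]$, $[\overrightarrow{p_3},\overrightarrow{p_1}]$ respectively has uniform$[0,1]$ marginals and is supported on the plane $w_1u_1+w_2u_2+w_3u_3=\frac{w_1+w_2+w_3}{2}$.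
   Context: ''Mass $m$ uniformly on the segment $[\overrightarrow{p},\overrightarrow{q}]$'' means the measure $m$ times the law of $t\overrightarrow{p}+(1-t)\overrightarrow{q}$ with $t$ uniform on $[0,1]$. *)

(* Defs.v *)
From Stdlib Require Import Reals Lra ClassicalDescription.
Open Scope R_scope.

Record pt3 := P3 { px : R; py : R; pz : R }.

Definition lerp (t : R) (p q : pt3) : pt3 :=
  P3 (t * px p + (1 - t) * px q) (t * py p + (1 - t) * py q) (t * pz p + (1 - t) * pz q).

Definition ind (P : R -> Prop) : R -> R :=
  fun t => if excluded_middle_informative (P t) then 1 else 0.

(* "the law of t p + (1-t) q, t uniform on [0,1], gives mass v to A":
   v is the Lebesgue measure of {t in [0,1] | t p + (1-t) q in A},
   computed as the (Riemann) integral over [0,1] of its indicator.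
   (Only used for sets A for which this indicator is Riemann integrable.) *)
Definition seg_law (p q : pt3) (A : pt3 -> Prop) (v : R) : Prop :=
  exists pr : Riemann_integrable (ind (fun t => A (lerp t p q))) 0 1,
    RiemannInt pr = v.

(* the measure placing masses m12, m23, m31 uniformly on the segments
   [p1,p2], [p2,p3], [p3,p1]: mu3 ... A v  means mu(A) = v *)
Definition mu3 (m12 m23 m31 : R) (p1 p2 p3 : pt3) (A : pt3 -> Prop) (v : R) : Prop :=
  exists v12 v23 v31,
    seg_law p1 p2 A v12 /\ seg_law p2 p3 A v23 /\ seg_law p3 p1 A v31 /\
    v = m12 * v12 + m23 * v23 + m31 * v31.

Definition coord (i : nat) (u : pt3) : R :=
  match i with 1%nat => px u | 2%nat => py u | _ => pz u end.

(* Main.v *)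
Require Import Defs.
From Stdlib Require Import Reals Lra Lia ClassicalDescription.
From Coquelicot Require Import Coquelicot.
Open Scope R_scope.

Lemma step_int (g : R -> R) (c A B : R) : 0 <= c <= 1 ->
  (forall t, 0 < t < c -> g t = A) -> (forall t, c < t < 1 -> g t = B) ->
  exists pr : Riemann_integrable g 0 1, RiemannInt pr = A * c + B * (1 - c).
Proof.
  intros Hc HA HB.
  assert (H1 : is_RInt g 0 c (scal (c - 0) A)).
  { apply is_RInt_ext with (f := fun _ => A); [|exact (@is_RInt_const R_NormedModule _ _ _)].
    intros x Hx. rewrite Rmin_left in Hx by lra. rewrite Rmax_right in Hx by lra.
    symmetry; apply HA; lra. }
  assert (H2 : is_RInt g c 1 (scal (1 - c) B)).
  { apply is_RInt_ext with (f := fun _ => B); [|exact (@is_RInt_const R_NormedModule _ _ _)].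
    intros x Hx. rewrite Rmin_left in Hx by lra. rewrite Rmax_right in Hx by lra.
    symmetry; apply HB; lra. }
  pose proof (is_RInt_Chasles _ _ _ _ _ _ H1 H2) as H3.
  assert (E : ex_RInt g 0 1) by (eexists; exact H3).
  exists (ex_RInt_Reals_0 _ _ _ E).
  rewrite <- RInt_Reals. rewrite (is_RInt_unique _ _ _ _ H3).
  unfold plus, scal; simpl; unfold mult; simpl. change (@Hierarchy.plus R_AbelianMonoid) with Rplus.
  ring.
Qed.

Lemma seg_lo (p q : pt3) (A : pt3 -> Prop) (c : R) : 0 <= c <= 1 ->
  (forall t, 0 < t < c -> A (lerp t p q)) -> (forall t, c < t < 1 -> ~ A (lerp t p q)) ->
  seg_law p q A c.
Proof.
  intros Hc H1 H2. unfold seg_law.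
  assert (HP1 : forall t, 0 < t < c -> Defs.ind (fun t => A (lerp t p q)) t = 1); [|
  assert (HP2 : forall t, c < t < 1 -> Defs.ind (fun t => A (lerp t p q)) t = 0); [|
  destruct (step_int _ c 1 0 Hc HP1 HP2) as [pr E]; exists pr; rewrite E; ring]].
  - intros t Ht. unfold Defs.ind. destruct (excluded_middle_informative (A (lerp t p q))) as [_|n]; auto.
    exfalso; apply n; auto.
  - intros t Ht. unfold Defs.ind. destruct (excluded_middle_informative (A (lerp t p q))) as [a|_]; auto.
    exfalso; apply (H2 t); auto.
Qed.

Lemma seg_hi (p q : pt3) (A : pt3 -> Prop) (c : R) : 0 <= c <= 1 ->
  (forall t, 0 < t < c -> ~ A (lerp t p q)) -> (forall t, c < t < 1 -> A (lerp t p q)) ->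
  seg_law p q A (1 - c).
Proof.
  intros Hc H1 H2. unfold seg_law.
  assert (HP1 : forall t, 0 < t < c -> Defs.ind (fun t => A (lerp t p q)) t = 0); [|
  assert (HP2 : forall t, c < t < 1 -> Defs.ind (fun t => A (lerp t p q)) t = 1); [|
  destruct (step_int _ c 0 1 Hc HP1 HP2) as [pr E]; exists pr; rewrite E; ring]].
  - intros t Ht. unfold Defs.ind. destruct (excluded_middle_informative (A (lerp t p q))) as [a|_]; auto.
    exfalso; apply (H1 t); auto.
  - intros t Ht. unfold Defs.ind. destruct (excluded_middle_informative (A (lerp t p q))) as [_|n]; auto.
    exfalso; apply n; auto.
Qed.

Lemma seg_none (p q : pt3) (A : pt3 -> Prop) :
  (forall t, 0 < t < 1 -> ~ A (lerp t p q)) -> seg_law p q A 0.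
Proof. intros H. apply seg_lo; [lra| intros; lra | auto]. Qed.

Lemma seg_all (p q : pt3) (A : pt3 -> Prop) :
  (forall t, 0 < t < 1 -> A (lerp t p q)) -> seg_law p q A 1.
Proof. intros H. replace 1 with (1 - 0) by ring. apply seg_hi; [lra| intros; lra | auto]. Qed.

Lemma lawU (p q : pt3) (F : pt3 -> R) s : (forall t, F (lerp t p q) = t) -> 0 <= s <= 1 ->
  seg_law p q (fun u => F u <= s) s.
Proof.
  intros HF Hs. apply seg_lo; auto; intros t Ht; rewrite HF; lra.
Qed.

Lemma lawLH (pL qL pH qH : pt3) (F : pt3 -> R) z s K :
  (forall t, F (lerp t pL qL) = (1 - t) * z) ->
  (forall t, F (lerp t pH qH) = t * z + (1 - t)) ->
  0 <= z <= 1 -> 0 <= s <= 1 ->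
  exists vL vH, seg_law pL qL (fun u => F u <= s) vL /\ seg_law pH qH (fun u => F u <= s) vH /\
    K * z * vL + K * (1 - z) * vH = K * s.
Proof.
  intros HL HH Hz Hs.
  destruct (Rlt_or_le s z) as [Hsz|Hsz].
  - exists (s / z), 0. split; [|split].
    + replace (s / z) with (1 - (1 - s / z)) by ring.
      assert (0 <= s / z <= 1).
      { split. apply Rmult_le_pos; [lra| left; apply Rinv_0_lt_compat; lra].
        apply Rmult_le_reg_r with z; [lra|]. unfold Rdiv; rewrite Rmult_assoc, Rinv_l; lra. }
      apply seg_hi; [lra| |]; intros t Ht; rewrite HL.
      * assert (s / z < 1 - t) by lra.
        assert (s < (1 - t) * z).
        { replace s with (s / z * z) by (field; lra). apply Rmult_lt_compat_r; lra. }
        lra.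
      * assert (1 - t < s / z) by lra.
        assert ((1 - t) * z < s).
        { replace s with (s / z * z) by (field; lra). apply Rmult_lt_compat_r; lra. }
        lra.
    + apply seg_none. intros t Ht. rewrite HH. nra.
    + field. lra.
  - destruct (Req_dec z 1) as [Hz1|Hz1].
    + subst z. exists 1, 1. split; [|split].
      * apply seg_all.
        intros t Ht; rewrite HL; nra.
      * apply seg_all.
        intros t Ht; rewrite HH; nra.
      * assert (s = 1) by lra; subst s; ring.
    + exists 1, (1 - (1 - s) / (1 - z)). split; [|split].
      * apply seg_all.
        intros t Ht; rewrite HL; nra.
      * assert (0 <= (1 - s) / (1 - z) <= 1).
        { split. apply Rmult_le_pos; [lra| left; apply Rinv_0_lt_compat; lra].
          apply Rmult_le_reg_r with (1 - z); [lra|]. unfold Rdiv; rewrite Rmult_assoc, Rinv_l; lra. }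
        apply seg_hi; [lra| |]; intros t Ht; rewrite HH.
        -- assert (t * (1 - z) < 1 - s).
           { replace (1 - s) with ((1 - s) / (1 - z) * (1 - z)) by (field; lra).
             apply Rmult_lt_compat_r; lra. }
           lra.
        -- assert (1 - s < t * (1 - z)).
           { replace (1 - s) with ((1 - s) / (1 - z) * (1 - z)) by (field; lra).
             apply Rmult_lt_compat_r; lra. }
           lra.
      * field. lra.
Qed.

Theorem mainTheorem5 (w1 w2 w3 : R)
  (hw1 : 0 < w1) (hw2 : 0 < w2) (hw3 : 0 < w3)
  (hmax : w1 + w2 + w3 >= 2 * Rmax w1 (Rmax w2 w3)) :
  let z1 := (w2 + w3 - w1) / (2 * w2) in
  let z2 := (w3 + w1 - w2) / (2 * w3) in
  let z3 := (w1 + w2 - w3) / (2 * w1) in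
  let p1 := P3 1 z1 0 in
  let p2 := P3 0 1 z2 in
  let p3 := P3 z3 0 1 in
  let D := (1 - z1) * (1 - z2) * (1 - z3) + 1 in
  let m12 := ((1 - z1) * (1 - z2) * (1 - z3) - (1 - z1) * (1 - z2) + (1 - z1)) / D in
  let m23 := ((1 - z1) * (1 - z2) * (1 - z3) - (1 - z2) * (1 - z3) + (1 - z2)) / D in
  let m31 := ((1 - z1) * (1 - z2) * (1 - z3) - (1 - z3) * (1 - z1) + (1 - z3)) / D in
  (0 <= z1 <= 1 /\ 0 <= z2 <= 1 /\ 0 <= z3 <= 1) /\
  (0 <= m12 /\ 0 <= m23 /\ 0 <= m31) /\
  m12 + m23 + m31 = 1 /\
  (* the measure lives on [0,1]^3 *)
  mu3 m12 m23 m31 p1 p2 p3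
    (fun u => ~ (0 <= px u <= 1 /\ 0 <= py u <= 1 /\ 0 <= pz u <= 1)) 0 /\
  (* uniform[0,1] marginals: P(u_i <= s) = s for s in [0,1] *)
  (forall (i : nat) (s : R), (1 <= i <= 3)%nat -> 0 <= s <= 1 ->
     mu3 m12 m23 m31 p1 p2 p3 (fun u => coord i u <= s) s) /\
  (* supported on the plane w.u = (w1+w2+w3)/2 *)
  mu3 m12 m23 m31 p1 p2 p3
    (fun u => w1 * px u + w2 * py u + w3 * pz u <> (w1 + w2 + w3) / 2) 0.
Proof.
  intros z1 z2 z3 p1 p2 p3 D m12 m23 m31.
  assert (M1 : w1 <= Rmax w1 (Rmax w2 w3)) by apply Rmax_l.
  assert (M2 : w2 <= Rmax w1 (Rmax w2 w3)) by (eapply Rle_trans; [apply Rmax_l|apply Rmax_r]).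
  assert (M3 : w3 <= Rmax w1 (Rmax w2 w3)) by (eapply Rle_trans; [apply Rmax_r|apply Rmax_r]).
  assert (E1 : z1 * (2 * w2) = w2 + w3 - w1) by (unfold z1; field; lra).
  assert (E2 : z2 * (2 * w3) = w3 + w1 - w2) by (unfold z2; field; lra).
  assert (E3 : z3 * (2 * w1) = w1 + w2 - w3) by (unfold z3; field; lra).
  assert (Cz : (1 - z1) * (1 - z2) * (1 - z3) = z1 * z2 * z3) by (unfold z1, z2, z3; field; lra).
  assert (hz1 : 0 <= z1 <= 1) by (split; nra).
  assert (hz2 : 0 <= z2 <= 1) by (split; nra).
  assert (hz3 : 0 <= z3 <= 1) by (split; nra).
  assert (Pl1 : w1 + w2 * z1 = (w1 + w2 + w3) / 2) by lra.
  assert (Pl2 : w2 + w3 * z2 = (w1 + w2 + w3) / 2) by lra.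
  assert (Pl3 : w3 + w1 * z3 = (w1 + w2 + w3) / 2) by lra.
  clearbody z1 z2 z3.
  assert (HP : 0 <= (1 - z1) * (1 - z2) * (1 - z3)).
  { apply Rmult_le_pos; [apply Rmult_le_pos|]; lra. }
  assert (HD : 0 < D) by (unfold D; lra).
  assert (HDi : 0 < / D) by (apply Rinv_0_lt_compat; lra).
  assert (N1 : m12 * D = (1 - z1) * (1 - z2) * (1 - z3) - (1 - z1) * (1 - z2) + (1 - z1))
    by (unfold m12; field; lra).
  assert (N2 : m23 * D = (1 - z1) * (1 - z2) * (1 - z3) - (1 - z2) * (1 - z3) + (1 - z2))
    by (unfold m23; field; lra).
  assert (N3 : m31 * D = (1 - z1) * (1 - z2) * (1 - z3) - (1 - z3) * (1 - z1) + (1 - z3))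
    by (unfold m31; field; lra).
  assert (ED : D = (1 - z1) * (1 - z2) * (1 - z3) + 1) by reflexivity.
  clearbody D m12 m23 m31.
  assert (Q1 : 0 <= (1 - z1) * z2) by (apply Rmult_le_pos; lra).
  assert (Q2 : 0 <= (1 - z2) * z3) by (apply Rmult_le_pos; lra).
  assert (Q3 : 0 <= (1 - z3) * z1) by (apply Rmult_le_pos; lra).
  assert (G1 : 0 <= m12) by nra.
  assert (G2 : 0 <= m23) by nra.
  assert (G3 : 0 <= m31) by nra.
  assert (S : m12 + m23 + m31 = 1).
  { apply Rmult_eq_reg_r with D; [|lra]. nra. }
  assert (X1 : m23 = (1 - m12) * z3) by (apply Rmult_eq_reg_r with D; nra).
  assert (X2 : m31 = (1 - m12) * (1 - z3)) by (apply Rmult_eq_reg_r with D; nra).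
  assert (Y1 : m31 = (1 - m23) * z1) by (apply Rmult_eq_reg_r with D; nra).
  assert (Y2 : m12 = (1 - m23) * (1 - z1)) by (apply Rmult_eq_reg_r with D; nra).
  assert (Z1 : m12 = (1 - m31) * z2) by (apply Rmult_eq_reg_r with D; nra).
  assert (Z2 : m23 = (1 - m31) * (1 - z2)) by (apply Rmult_eq_reg_r with D; nra).
  subst p1 p2 p3.
  split; [tauto|]. split; [tauto|]. split; [exact S|].
  split; [|split].
  - exists 0, 0, 0. split; [|split; [|split]]; try ring;
      apply seg_none; intros t Ht; unfold lerp; simpl; intros N; apply N;
      repeat split; nra.
  - intros i s Hi Hs. destruct i as [|[|[|[|i]]]]; try lia.
    + destruct (lawLH (P3 0 1 z2) (P3 z3 0 1) (P3 z3 0 1) (P3 1 z1 0) (coord 1) z3 s (1 - m12))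
        as [vL [vH [A [B C]]]]; try (intros; simpl; ring); auto.
      exists s, vL, vH. split; [apply lawU; auto; intros; simpl; ring|].
      split; [exact A|]. split; [exact B|]. rewrite X1, X2. lra.
    + destruct (lawLH (P3 z3 0 1) (P3 1 z1 0) (P3 1 z1 0) (P3 0 1 z2) (coord 2) z1 s (1 - m23))
        as [vL [vH [A [B C]]]]; try (intros; simpl; ring); auto.
      exists vH, s, vL. split; [exact B|].
      split; [apply lawU; auto; intros; simpl; ring|]. split; [exact A|]. rewrite Y1, Y2. lra.
    + destruct (lawLH (P3 1 z1 0) (P3 0 1 z2) (P3 0 1 z2) (P3 z3 0 1) (coord 3) z2 s (1 - m31))
        as [vL [vH [A [B C]]]]; try (intros; simpl; ring); auto.
      exists vL, vH, s. split; [exact A|]. split; [exact B|].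
      split; [apply lawU; auto; intros; simpl; ring|]. rewrite Z1, Z2. lra.
  - exists 0, 0, 0. split; [|split; [|split]]; try ring;
      apply seg_none; intros t Ht; unfold lerp; simpl; intros N; apply N; nra.
Qed.
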